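(* The influence (objective) function of the DIME problem is not adaptive submodular: there exist a DIME instance (an uncertain network with existence probabilities $u$, propagation probabilities $p$, and horizon $L$), partial realizations $\psi\subseteq\psi'$, and a node $v$ such that $\Delta(v\mid\psi)<\Delta(v\mid\psi')$.
   Context: An uncertain network is a directed graph $G=(V,E)$ whose edge set is the disjoint union of certain edges $E_c$ and uncertain edges $E_u$; each $e\in E_u$ exists independently with probability $u(e)$, and each $e\in E$ has a propagation probability $p(e)$. Influence model: influenced nodes stay influenced forever; at each time step, every influenced node $x$ independently tries to influence each not-yet-influenced out-neighbour $y$ along an existing edge $(x,y)$, succeeding with probability $p(x,y)$; failed attempts are repeated in every subsequent time step. A realization $\Phi$ specifies, for every uncertain edge, whether it exists. For a set $S\subseteq V$ of selected nodes, $f(S,\Phi)$ denotes the expected number of nodes influenced after $L$ time steps of spread starting from $S$ (all of $S$ influenced initially) in the network given by $\Phi$, with expectation over the propagation randomness. Selecting a node reveals (observes) the existence states of all uncertain edges leaving that node. A partial realization $\psi$ consists of a set $\mathrm{dom}(\psi)$ of selected nodes together with the observed states of the uncertain edges leaving them; $\Phi\sim\psi$ means $\Phi$ is consistent with these observations; $\psi\subseteq\psi'$ means $\mathrm{dom}(\psi)\subseteq\mathrm{dom}(\psi')$ and the observations agree. The conditional expected marginal benefit is $\Delta(v\mid\psi)=\mathbb{E}_{\Phi}[f(\mathrm{dom}(\psi)\cup\{v\},\Phi)-f(\mathrm{dom}(\psi),\Phi)\mid \Phi\sim\psi]$, with $\Phi$ drawn from the edge-existence distribution. The function is adaptive submodular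 (Golovin–Krause) if $\Delta(v\mid\psi)\ge\Delta(v\mid\psi')$ for all $\psi\subseteq\psi'$ and all $v$. *)

(* Defs.v *)
From HB Require Import structures.
From mathcomp Require Import all_boot all_order all_algebra.
Set Implicit Arguments. Unset Strict Implicit. Unset Printing Implicit Defensive.
Import Order.TTheory GRing.Theory Num.Theory.
Local Open Scope ring_scope.

Section DIME.
Variables (R : numFieldType) (V : finType).
Implicit Types (E ec eu Phi O : {set V * V}) (A B S D : {set V}).

Variable p : V -> V -> R.

Definition fail_prob E A (y : V) : R :=
  \prod_(x in A | (x, y) \in E) (1 - p x y).

(* probability that, from influenced set A, exactly the nodes of B
   (B disjoint from A) become newly influenced in one time step *)
Definition step_prob E A B : R :=
  \prod_(y in ~: A) (if y \in B then 1 - fail_prob E A y else fail_prob E A y).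

Fixpoint exp_spread E (k : nat) A : R :=
  match k with
  | 0 => #|A|%:R
  | k'.+1 => \sum_(B : {set V} | B \subset ~: A)
               step_prob E A B * exp_spread E k' (A :|: B)
  end.

(* f(S, Phi): the network given by Phi has edges E_c together with the
   existing uncertain edges Phi (Phi a subset of E_u) *)
Definition f ec (L : nat) S Phi : R := exp_spread (ec :|: Phi) L S.

Definition real_prob eu (u : V -> V -> R) Phi : R :=
  \prod_(e in eu) (if e \in Phi then u e.1 e.2 else 1 - u e.1 e.2).

Definition consistent eu D O Phi : bool :=
  [forall e in eu, (e.1 \in D) ==> ((e \in Phi) == (e \in O))].

(* (D, O) is a partial realization: O lists the observed existing uncertain
   edges, all leaving nodes of D *)
Definition valid_partial eu D O : bool :=
  O \subset [set e in eu | e.1 \in D].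

Definition subpartial eu D O D' O' : bool :=
  (D \subset D') && consistent eu D O O'.

Definition cons_mass eu u D O : R :=
  \sum_(Phi : {set V * V} | (Phi \subset eu) && consistent eu D O Phi)
     real_prob eu u Phi.

Definition Delta ec eu u (L : nat) D O (v : V) : R :=
  (\sum_(Phi : {set V * V} | (Phi \subset eu) && consistent eu D O Phi)
     real_prob eu u Phi * (f ec L (v |: D) Phi - f ec L D Phi))
  / cons_mass eu u D O.

End DIME.

(* Main.v *)
Require Import Defs.
From HB Require Import structures.
From mathcomp Require Import all_boot all_order all_algebra.
From mathcomp Require Import lra.
Import Order.TTheory GRing.Theory Num.Theory.
Local Open Scope ring_scope.

Definition i0 : 'I_3 := @Ordinal 3 0 isT.
Definition i1 : 'I_3 := @Ordinal 3 1 isT.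
Definition i2 : 'I_3 := @Ordinal 3 2 isT.
Definition ecx : {set 'I_3 * 'I_3} := [set (i2, i1)].
Definition eux : {set 'I_3 * 'I_3} := [set (i1, i0)].
Definition uu (x y : 'I_3) : rat := 1/2.
Definition pp (x y : 'I_3) : rat := 1.

Definition nbr (E : {set 'I_3 * 'I_3}) (A : {set 'I_3}) : {set 'I_3} :=
  [set y | (y \notin A) && [exists x in A, (x, y) \in E]].

Lemma fail_det E A y : fail_prob pp E A y = if [exists x in A, (x,y) \in E] then 0 else 1.
Proof.
rewrite /fail_prob /pp subrr; case: existsP => [[x /andP[xA xE]]|no].
  by rewrite (bigD1 x) /= ?mul0r // xA xE.
rewrite big_pred0 // => x; apply/negbTE/andP => -[xA xE]; apply: no; exists x.
by rewrite xA xE.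
Qed.

Lemma nbr_sub E A : nbr E A \subset ~: A.
Proof. by apply/subsetP => y; rewrite !inE => /andP[]. Qed.

Lemma step_det E A (B : {set 'I_3}) : B \subset ~: A -> step_prob pp E A B = (B == nbr E A)%:R.
Proof.
move=> BA; rewrite /step_prob; case: eqP => [->|neq].
  rewrite big1 // => y; rewrite inE => yA; rewrite fail_det inE yA /=.
  by case: existsP => _; rewrite ?subr0.
case: (boolP [forall y, (y \in B) == (y \in nbr E A)]) => [/forallP H|].
  by exfalso; apply: neq; apply/setP => y; apply/eqP/H.
rewrite negb_forall => /existsP [y Hy].
have yA : y \in ~: A.
  case yB: (y \in B); first by apply: (subsetP BA).
  by move: yB Hy => ->; rewrite eq_sym eqbF_neg negbK; apply: (subsetP (nbr_sub E A)).
rewrite (bigD1 y) //=; apply/eqP; rewrite mulf_eq0; apply/orP; left; apply/eqP.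
move: yA Hy; rewrite inE => yA; rewrite fail_det inE yA /=.
by case: (y \in B); case: existsP => _ //= _; rewrite subrr.
Qed.

Lemma spread_S E k A : exp_spread pp E k.+1 A = exp_spread pp E k (A :|: nbr E A).
Proof.
rewrite /= (bigD1 (nbr E A)) ?nbr_sub //= step_det ?nbr_sub // eqxx mul1r.
rewrite big1 ?addr0 // => B /andP[BA Bn]; by rewrite step_det // (negbTE Bn) mul0r.
Qed.

Lemma sum_sub1 (e : 'I_3 * 'I_3) (P : pred {set 'I_3 * 'I_3}) (F : {set 'I_3 * 'I_3} -> rat) :
  \sum_(Phi : {set 'I_3 * 'I_3} | (Phi \subset [set e]) && P Phi) F Phi =
  (if P set0 then F set0 else 0) + (if P [set e] then F [set e] else 0).
Proof.
have ne : [set e] != set0 by apply/set0Pn; exists e; rewrite set11.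
rewrite big_mkcond (bigD1 set0) //= (bigD1 [set e]) //= big1 ?addr0.
  by rewrite sub0set subxx.
move=> Phi /andP[n0 n1]; by rewrite subset1 (negbTE n0) (negbTE n1).
Qed.


Lemma ex3 (P : pred 'I_3) : [exists x, P x] = [|| P i0, P i1 | P i2].
Proof.
apply/existsP/idP => [[x]|].
  case: x => [[|[|[|k]]] Hk] Px //.
  - move: Px; have -> : Ordinal Hk = i0 by apply: val_inj.
    by move=> ->.
  - move: Px; have -> : Ordinal Hk = i1 by apply: val_inj.
    by move=> ->; rewrite orbT.
  - move: Px; have -> : Ordinal Hk = i2 by apply: val_inj.
    by move=> ->; rewrite !orbT.
by case/or3P => H; eexists; exact: H.
Qed.

Definition cl E A := A :|: nbr E A.

Lemma f2 ec S Phi : f pp ec 2 S Phi = #|cl (ec :|: Phi) (cl (ec :|: Phi) S)|%:R.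
Proof. by rewrite /f !spread_S. Qed.

Ltac solset := apply/setP => -[[|[|[|k]]] Hk]; rewrite /cl /nbr !(ex3, inE) //=.

Lemma c1 : cl (ecx :|: set0) (cl (ecx :|: set0) [set i0; i2]) = [set: 'I_3].
Proof. solset. Qed.
Lemma c2 : cl (ecx :|: set0) (cl (ecx :|: set0) [set i2]) = [set i2; i1].
Proof. solset. Qed.
Lemma c3 : cl (ecx :|: eux) (cl (ecx :|: eux) [set i0; i2]) = [set: 'I_3].
Proof. solset. Qed.
Lemma c4 : cl (ecx :|: eux) (cl (ecx :|: eux) [set i2]) = [set: 'I_3].
Proof. solset. Qed.
Lemma c5 : cl (ecx :|: set0) (cl (ecx :|: set0) (i0 |: [set i2; i1])) = [set: 'I_3].
Proof. solset. Qed.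
Lemma c6 : cl (ecx :|: set0) (cl (ecx :|: set0) [set i2; i1]) = [set i2; i1].
Proof. solset. Qed.

Lemma cons1 D O Phi : consistent eux D O Phi = ((i1 \in D) ==> (((i1,i0) \in Phi) == ((i1,i0) \in O))).
Proof.
rewrite /consistent /eux; apply/forallP/idP => [/(_ (i1, i0))|H e].
  by rewrite set11.
by rewrite inE; apply/implyP => /eqP ->.
Qed.

Lemma rp Phi : real_prob eux uu Phi = 1/2.
Proof. by rewrite /real_prob /eux big_set1 /uu; case: ifP => // _; lra. Qed.

Theorem theorem3 :
  exists (n : nat) (ec eu : {set 'I_n * 'I_n}) (u p : 'I_n -> 'I_n -> rat)
         (L : nat) (D D' : {set 'I_n}) (O O' : {set 'I_n * 'I_n}) (v : 'I_n),
    [/\ [disjoint ec & eu],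
        (forall x y, 0 <= u x y <= 1) &
        (forall x y, 0 <= p x y <= 1)] /\
    [/\ valid_partial eu D O, valid_partial eu D' O' &
        subpartial eu D O D' O'] /\
    [/\ 0 < cons_mass eu u D O,
        0 < cons_mass eu u D' O' &
        Delta p ec eu u L D O v < Delta p ec eu u L D' O' v].
Proof.
exists 3%N, ecx, eux, uu, pp, 2%N, [set i2], [set i2; i1], set0, set0, i0.
have m1 : cons_mass eux uu [set i2] set0 = 1.
  rewrite /cons_mass /eux sum_sub1 !cons1 !inE /= !rp; lra.
have m2 : cons_mass eux uu [set i2; i1] set0 = 1/2.
  rewrite /cons_mass /eux sum_sub1 !cons1 !inE /= !rp; lra.
split; [split|split; [split|split]].
- apply/pred0P => e; rewrite /= /ecx /eux !inE.
  by case: eqP => // ->.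
- by move=> x y; rewrite /uu; apply/andP; split; lra.
- by move=> x y; rewrite /pp ler01 lexx.
- by rewrite /valid_partial sub0set.
- by rewrite /valid_partial sub0set.
- rewrite /subpartial cons1 !inE /= andbT.
  by apply/subsetP => x; rewrite !inE => ->.
- by rewrite m1 ltr01.
- rewrite m2; lra.
- rewrite /Delta m1 m2 /cons_mass /eux !sum_sub1 !cons1 !inE /= !rp !f2.
  rewrite -/eux c1 c2 c3 c4 c5 c6 cardsT card_ord cards2 /=.
  lra.
Qed.
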